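(* Let $G=(V,E)$ be a finite simple undirected graph with $k$ vertices and let $n\ge k$ be an integer. Then $Y(n,G)\le D(n,k)$, with equality only if $G$ is the complete graph $K_k$.
   Context: A walk of length $n-1$ in a graph is a sequence of $n$ vertices $v_1,\dots,v_n$ such that $\{v_i,v_{i+1}\}$ is an edge for each $i$. $Y(n,G)$ denotes the number of walks of length $n-1$ in $G$ that visit every vertex of $G$ at least once. $D(n,k)=Y(n,K_k)$, where $K_k$ is the complete graph on $k$ (labelled) vertices. *)

(* Defs.v *)
From mathcomp Require Import all_boot.
Set Implicit Arguments. Unset Strict Implicit. Unset Printing Implicit Defensive.

Definition simple_graph (T : finType) (e : rel T) : Prop :=
  symmetric e /\ irreflexive e.

(* A walk of length n-1: a sequence v_0, ..., v_{n-1} of n vertices, encoded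
   as a finite function 'I_n -> T, with consecutive vertices adjacent. *)
Definition is_walk (T : finType) (e : rel T) (n : nat) (w : {ffun 'I_n -> T}) : bool :=
  [forall i : 'I_n, forall j : 'I_n, (j == i.+1 :> nat) ==> e (w i) (w j)].

Definition covers (T : finType) (n : nat) (w : {ffun 'I_n -> T}) : bool :=
  [forall v : T, exists i : 'I_n, w i == v].

Definition Y (n : nat) (T : finType) (e : rel T) : nat :=
  #|[set w : {ffun 'I_n -> T} | is_walk e w && covers w]|.

Definition complete_rel (k : nat) : rel 'I_k := fun x y => x != y.

Definition D (n k : nat) : nat := Y n (@complete_rel k).

Definition is_complete (T : finType) (e : rel T) : Prop :=
  forall x y : T, x != y -> e x y.

(* Main.v *)
Require Import Defs.
From mathcomp Require Import all_boot.
From mathcomp Require Import zify.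

Section Aux.
Variables (T : finType) (n : nat).

Definition phi (u : {ffun 'I_n -> T}) : {ffun 'I_n -> 'I_#|T|} :=
  [ffun i => enum_rank (u i)].

Lemma phi_inj : injective phi.
Proof.
move=> u v /ffunP H; apply/ffunP => i; move: (H i); rewrite !ffunE.
exact: enum_rank_inj.
Qed.
End Aux.

Theorem mainTheorem2 (T : finType) (e : rel T) (n : nat) :
  simple_graph e -> #|T| <= n ->
  Y n e <= D n #|T| /\ (Y n e = D n #|T| -> is_complete e).
Proof.
move=> [esym eirr] hkn.
set A := [set w : {ffun 'I_n -> T} | is_walk e w && covers w].
set B := [set w : {ffun 'I_n -> 'I_#|T|} | is_walk (@complete_rel #|T|) w && covers w].
have sub : (@phi T n) @: A \subset B.
  apply/subsetP => w /imsetP [u]; rewrite inE => /andP [hw hc] ->.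
  rewrite inE; apply/andP; split.
    apply/forallP => i; apply/forallP => j; apply/implyP => hij.
    rewrite !ffunE /complete_rel.
    have := (forallP (forallP hw i) j); rewrite hij /= => he.
    apply/negP => /eqP /enum_rank_inj heq.
    by move: he; rewrite heq eirr.
  apply/forallP => v; have /existsP [i /eqP hi] := forallP hc (enum_val v).
  by apply/existsP; exists i; rewrite ffunE hi enum_valK.
have cardA : #|(@phi T n) @: A| = #|A| by rewrite card_imset //; exact: phi_inj.
have le : Y n e <= D n #|T|.
  by rewrite /Y /D -/A -/B -cardA; exact: subset_leq_card.
split=> // heq x y hxy.
apply/negPn/negP => hne.
have eqAB : (@phi T n) @: A = B.
  apply/eqP; rewrite eqEcard sub /= cardA; move: heq; rewrite /Y /D -/A -/B => ->.
  by [].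
set s := x :: y :: [seq z <- enum T | (z != x) && (z != y)].
have us : uniq s.
  rewrite /= inE negb_or hxy /= !mem_filter !eqxx /= andbF /=.
  by rewrite filter_uniq // enum_uniq.
have mems : forall z, z \in s.
  move=> z; rewrite !inE mem_filter mem_enum andbT.
  by case: (z == x); case: (z == y).
have sz : size s = #|T|.
  have : perm_eq s (enum T).
    apply: uniq_perm => //; first exact: enum_uniq.
    by move=> z; rewrite mems mem_enum.
  by move/perm_size ->; rewrite cardE.
have k2 : 2 <= #|T| by rewrite -sz.
set v : {ffun 'I_n -> T} := [ffun i : 'I_n => nth x s (i %% #|T|)].
have vB : @phi T n v \in B.
  rewrite inE; apply/andP; split.
    apply/forallP => i; apply/forallP => j; apply/implyP => /eqP hij.
    rewrite !ffunE /complete_rel; apply/negP => /eqP /enum_rank_inj.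
    move/eqP; rewrite nth_uniq ?sz ?ltn_mod; try lia.
    rewrite hij; move/eqP => hm.
    move: hm; rewrite modnS; case: ifP => [hd hi0|_ hm]; last lia.
    have hdi : #|T| %| i by rewrite /dvdn hi0.
    move: hd; rewrite -addn1 dvdn_addr // dvdn1 => /eqP hk; lia.
  apply/forallP => w; apply/existsP.
  have hk : index (enum_val w) s < #|T| by rewrite -sz index_mem.
  have hi : index (enum_val w) s < n by apply: leq_trans hkn.
  exists (Ordinal hi); rewrite !ffunE.
  by rewrite [nat_of_ord _]/= (modn_small hk) nth_index ?enum_valK.
rewrite -eqAB in vB; rewrite mem_imset in vB; last exact: phi_inj.
move: vB; rewrite inE => /andP [hw _].
have h0 : 0 < n by lia.
have h1 : 1 < n by lia.
have := forallP (forallP hw (Ordinal h0)) (Ordinal h1).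
rewrite /= !ffunE /= mod0n modn_small //=.
by rewrite (negbTE hne).
Qed.
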